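(* In the setting described in the context, the empirical cost functions $f_t(\mathbf{L})$ are uniformly bounded and Lipschitz in $\mathbf{L}$.
   Context: Fix integers $p,r\ge 1$ and constants $\lambda_1,\lambda_2>0$. Let $\mathcal{G}$ be a finite collection of subsets of $\{1,\dots,p\}$. For $\mathbf{s}\in\mathbb{R}^p$ and $g\in\mathcal{G}$, let $\mathbf{s}_{|g}$ be the vector equal to $\mathbf{s}$ on indices in $g$ and zero elsewhere, and $\|\mathbf{s}\|_{\ell_1/\ell_\infty}=\sum_{g\in\mathcal{G}}\|\mathbf{s}_{|g}\|_\infty$. Define $\hat\ell(\mathbf{d},\mathbf{L},\mathbf{r},\mathbf{s})=\tfrac12\|\mathbf{d}-\mathbf{L}\mathbf{r}-\mathbf{s}\|_2^2+\tfrac{\lambda_1}{2}\|\mathbf{r}\|_2^2+\lambda_2\|\mathbf{s}\|_{\ell_1/\ell_\infty}$ and $\ell(\mathbf{d},\mathbf{L})=\min_{\mathbf{r},\mathbf{s}}\hat\ell(\mathbf{d},\mathbf{L},\mathbf{r},\mathbf{s})$. Data $\mathbf{d}_1,\mathbf{d}_2,\dots\in\mathbb{R}^p$ are independent and uniformly bounded (there is $M$ with $\|\mathbf{d}_t\|_2\le M$ for all $t$). The empirical cost function is $f_t(\mathbf{L})=\frac1t\sum_{i=1}^t\ell(\mathbf{d}_i,\mathbf{L})+\frac{\lambda_1}{2t}\|\mathbf{L}\|_F^2$, considered for $\mathbf{L}$ in a compact set $\mathcal{L}\subset\mathbb{R}^{p\times r}$ (the set containing the iterates of the online algorithm $\mathbf{L}_t=\mathbf{B}_t(\mathbf{A}_t+\lambda_1\mathbf{I})^{-1}$,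 $\mathbf{A}_t=\sum_{i\le t}\mathbf{r}_i\mathbf{r}_i^T$, $\mathbf{B}_t=\sum_{i\le t}(\mathbf{d}_i-\mathbf{s}_i)\mathbf{r}_i^T$, with $(\mathbf{r}_i,\mathbf{s}_i)$ a minimizer of $\hat\ell(\mathbf{d}_i,\mathbf{L}_{i-1},\cdot,\cdot)$). ''Uniformly'' means with constants independent of $t$. *)

(* Defs.v *)
From HB Require Import structures.
From mathcomp Require Import all_boot all_order all_algebra.
From mathcomp Require Import all_classical all_reals all_analysis.
Set Implicit Arguments. Unset Strict Implicit. Unset Printing Implicit Defensive.
Import Order.TTheory GRing.Theory Num.Theory.
Import numFieldNormedType.Exports.
Local Open Scope ring_scope.
Local Open Scope classical_set_scope.

Section Defs.
Variable R : realType.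

Definition sqnorm2 (n : nat) (v : 'cV[R]_n) : R := \sum_(i < n) (v i 0) ^+ 2.

Definition frob (m n : nat) (A : 'M[R]_(m, n)) : R :=
  Num.sqrt (\sum_(i < m) \sum_(j < n) (A i j) ^+ 2).

Definition restr_inf (p : nat) (s : 'cV[R]_p) (g : {set 'I_p}) : R :=
  \big[Num.max/0]_(i in g) `|s i 0|.

Definition l1linf (p : nat) (G : {set {set 'I_p}}) (s : 'cV[R]_p) : R :=
  \sum_(g in G) restr_inf s g.

Definition lhat (p r : nat) (G : {set {set 'I_p}}) (lam1 lam2 : R)
  (d : 'cV[R]_p) (L : 'M[R]_(p, r)) (x : 'cV[R]_r) (s : 'cV[R]_p) : R :=
  2^-1 * sqnorm2 (d - L *m x - s) + lam1 / 2 * sqnorm2 x + lam2 * l1linf G s.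

(* l (d, L) = min_{r,s} \hat l  (the minimum exists; stated as the infimum) *)
Definition ell (p r : nat) (G : {set {set 'I_p}}) (lam1 lam2 : R)
  (d : 'cV[R]_p) (L : 'M[R]_(p, r)) : R :=
  inf (range (fun xs : 'cV[R]_r * 'cV[R]_p => lhat G lam1 lam2 d L xs.1 xs.2)).

Definition emp_cost (p r : nat) (G : {set {set 'I_p}}) (lam1 lam2 : R)
  (d : nat -> 'cV[R]_p) (t : nat) (L : 'M[R]_(p, r)) : R :=
  t%:R^-1 * (\sum_(1 <= i < t.+1) ell G lam1 lam2 (d i) L)
  + lam1 / (2 * t%:R) * (frob L) ^+ 2.

End Defs.

(* Main.v *)
Require Import Defs.
From HB Require Import structures.
From mathcomp Require Import all_boot all_order all_algebra.
From mathcomp Require Import all_classical all_reals all_analysis.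
From mathcomp Require Import ring lra.
Import Order.TTheory GRing.Theory Num.Theory.

Import numFieldNormedType.Exports.
Local Open Scope ring_scope.
Local Open Scope classical_set_scope.
Section CS.
Variable R : realType.

Lemma CS (I : finType) (a b : I -> R) :
  (\sum_i a i * b i) ^+ 2 <= (\sum_i a i ^+ 2) * (\sum_i b i ^+ 2).
Proof.
set A := \sum_i a i ^+ 2; set B := \sum_i b i ^+ 2; set C := \sum_i a i * b i.
have H0 : 0 <= \sum_i \sum_j (a i * b j - a j * b i) ^+ 2.
  by apply: sumr_ge0 => i _; apply: sumr_ge0 => j _; exact: sqr_ge0.
have E : \sum_i \sum_j (a i * b j - a j * b i) ^+ 2 = 2 * (A * B - C ^+ 2).
  transitivity (\sum_i (a i ^+ 2 * B + b i ^+ 2 * A - 2 * (a i * b i) * C)).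
    apply: eq_bigr => i _.
    rewrite /A /B /C !mulr_sumr -!big_split -sumrB /=.
    by apply: eq_bigr => j _; ring.
  rewrite sumrB big_split /= -!mulr_suml -mulr_sumr -/A -/B -/C; ring.
rewrite E in H0; nra.
Qed.

Lemma CS_abs (I : finType) (a b : I -> R) :
  `|\sum_i a i * b i| <= Num.sqrt (\sum_i a i ^+ 2) * Num.sqrt (\sum_i b i ^+ 2).
Proof.
rewrite -sqrtrM; last by apply: sumr_ge0 => i _; exact: sqr_ge0.
rewrite -sqrtr_sqr ler_sqrt ?CS //.
by apply: mulr_ge0; apply: sumr_ge0 => i _; exact: sqr_ge0.
Qed.




Definition dot n (u v : 'cV[R]_n) := \sum_i u i 0 * v i 0.
Definition frob2 m n (A : 'M[R]_(m,n)) := \sum_i \sum_j A i j ^+ 2.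

Lemma sqnorm2_ge0 n (v : 'cV[R]_n) : 0 <= sqnorm2 v.
Proof. by apply: sumr_ge0 => i _; exact: sqr_ge0. Qed.

Arguments frob2 {m n}.
Arguments dot {n}.
Lemma frob2_ge0 m n (A : 'M[R]_(m,n)) : 0 <= frob2 A.
Proof. by apply: sumr_ge0 => i _; apply: sumr_ge0 => j _; exact: sqr_ge0. Qed.

Arguments sqnorm2_ge0 {n}.
Arguments frob2_ge0 {m n}.
Lemma frob_sq m n (A : 'M[R]_(m,n)) : frob A ^+ 2 = frob2 A.
Proof. by rewrite /frob sqr_sqrtr // frob2_ge0. Qed.

Lemma sqnorm2B n (u v : 'cV[R]_n) :
  sqnorm2 (u - v) = sqnorm2 u - 2 * dot u v + sqnorm2 v.
Proof.
rewrite /sqnorm2 /dot.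
transitivity (\sum_i (u i 0 ^+ 2 - 2 * (u i 0 * v i 0) + v i 0 ^+ 2)).
  by apply: eq_bigr => i _; rewrite !mxE; ring.
by rewrite big_split sumrB /= -mulr_sumr.
Qed.

Lemma mulmx_bound m n (D : 'M[R]_(m,n)) (x : 'cV[R]_n) :
  sqnorm2 (D *m x) <= frob2 D * sqnorm2 x.
Proof.
rewrite /sqnorm2 /frob2 mulr_suml; apply: ler_sum => i _.
rewrite mxE; exact: CS.
Qed.

Lemma frob2_pair m n (A : 'M[R]_(m,n)) :
  frob2 A = \sum_(u : 'I_m * 'I_n) A u.1 u.2 ^+ 2.
Proof. by rewrite /frob2 pair_bigA. Qed.

Lemma frob2_diff m n (L1 L2 : 'M[R]_(m,n)) :
  `|frob2 L1 - frob2 L2| <= Num.sqrt (frob2 (L1 - L2)) * Num.sqrt (frob2 (L1 + L2)).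
Proof.
have -> : frob2 L1 - frob2 L2 = \sum_(u : 'I_m * 'I_n) (L1 - L2) u.1 u.2 * (L1 + L2) u.1 u.2.
  rewrite !frob2_pair -sumrB; apply: eq_bigr => u _; rewrite !mxE; ring.
rewrite !frob2_pair; exact: CS_abs.
Qed.

Lemma frob2D_le m n (L1 L2 : 'M[R]_(m,n)) :
  frob2 (L1 + L2) <= 2 * frob2 L1 + 2 * frob2 L2.
Proof.
rewrite /frob2 !mulr_sumr -big_split /=; apply: ler_sum => i _.
rewrite !mulr_sumr -big_split /=; apply: ler_sum => j _.
rewrite mxE; have := sqr_ge0 (L1 i j - L2 i j); nra.
Qed.

Lemma frob2B_le m n (L1 L2 : 'M[R]_(m,n)) :
  frob2 (L1 - L2) <= 2 * frob2 L1 + 2 * frob2 L2.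
Proof.
rewrite /frob2 !mulr_sumr -big_split /=; apply: ler_sum => i _.
rewrite !mulr_sumr -big_split /=; apply: ler_sum => j _.
rewrite !mxE; have := sqr_ge0 (L1 i j + L2 i j); nra.
Qed.

Lemma frob2BC m n (L1 L2 : 'M[R]_(m,n)) : frob2 (L2 - L1) = frob2 (L1 - L2).
Proof.
by apply: eq_bigr => i _; apply: eq_bigr => j _; rewrite !mxE -sqrrN opprB.
Qed.

Lemma frobBC m n (L1 L2 : 'M[R]_(m,n)) : frob (L2 - L1) = frob (L1 - L2).
Proof. by rewrite /frob -/(frob2 _) -/(frob2 _) frob2BC. Qed.


Lemma restr_inf_ge0 p (s : 'cV[R]_p) g : 0 <= restr_inf s g.
Proof.
rewrite /restr_inf; elim/big_ind: _ => //.
by move=> x y hx hy; rewrite le_max hx.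
Qed.

Lemma l1linf_ge0 p (G : {set {set 'I_p}}) (s : 'cV[R]_p) : 0 <= l1linf G s.
Proof. by apply: sumr_ge0 => g _; exact: restr_inf_ge0. Qed.

Lemma l1linf0 p (G : {set {set 'I_p}}) : l1linf G (0 : 'cV[R]_p) = 0.
Proof.
rewrite /l1linf; apply: big1 => g _; rewrite /restr_inf.
elim/big_ind: _ => //; first by move=> x y -> ->; rewrite maxxx.
by move=> i _; rewrite mxE normr0.
Qed.

Arguments CS {I}.
Arguments CS_abs {I}.
Arguments frob_sq {m n}.
Arguments sqnorm2B {n}.
Arguments mulmx_bound {m n}.
Arguments frob2_pair {m n}.
Arguments frob2_diff {m n}.
Arguments frob2D_le {m n}.
Arguments frob2B_le {m n}.
Arguments frob2BC {m n}.
Arguments frobBC {m n}.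
Arguments restr_inf_ge0 {p}.
Arguments l1linf_ge0 {p}.
Arguments l1linf0 {p}.

Section Ell.
Variables (p r : nat) (G : {set {set 'I_p}}) (lam1 lam2 : R).
Hypotheses (hl1 : 0 < lam1) (hl2 : 0 < lam2).

Lemma lhat_ge0 d (L : 'M[R]_(p, r)) x s : 0 <= lhat G lam1 lam2 d L x s.
Proof.
rewrite /lhat; apply: addr_ge0; first apply: addr_ge0.
- by apply: mulr_ge0; [rewrite invr_ge0 | exact: sqnorm2_ge0].
- by apply: mulr_ge0; [apply: divr_ge0; [exact: ltW|] | exact: sqnorm2_ge0].
- by apply: mulr_ge0; [exact: ltW | exact: l1linf_ge0].
Qed.

Let S d (L : 'M[R]_(p, r)) :=
  range (fun xs : 'cV[R]_r * 'cV[R]_p => lhat G lam1 lam2 d L xs.1 xs.2).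

Lemma S_ne d (L : 'M[R]_(p, r)) : S d L !=set0.
Proof. by exists (lhat G lam1 lam2 d L 0 0); exists (0, 0). Qed.

Lemma S_lb d (L : 'M[R]_(p, r)) : lbound (S d L) 0.
Proof. by move=> y [xs _ <-]; exact: lhat_ge0. Qed.

Lemma S_hasinf d (L : 'M[R]_(p, r)) : has_inf (S d L).
Proof. by split; [exact: S_ne | exists 0; exact: S_lb]. Qed.

Lemma ell_ge0 d (L : 'M[R]_(p, r)) : 0 <= ell G lam1 lam2 d L.
Proof. exact: lb_le_inf (S_ne d L) (S_lb d L). Qed.

Lemma ell_le d (L : 'M[R]_(p, r)) x s : ell G lam1 lam2 d L <= lhat G lam1 lam2 d L x s.
Proof.
apply: (ge_inf (S_hasinf d L).2); by exists (x, s).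
Qed.

Lemma ell_adh d (L : 'M[R]_(p, r)) e : 0 < e ->
  exists x s, lhat G lam1 lam2 d L x s < ell G lam1 lam2 d L + e.
Proof.
move=> e0; have [y [[x s] _ <-] hy] := inf_adherent e0 (S_hasinf d L).
by exists x, s.
Qed.

Lemma ell_le_half d (L : 'M[R]_(p, r)) : ell G lam1 lam2 d L <= 2^-1 * sqnorm2 d.
Proof.
apply: le_trans (ell_le d L 0 0) _.
rewrite /lhat mulmx0 !subr0 l1linf0 mulr0 addr0.
have -> : sqnorm2 (0 : 'cV[R]_r) = 0 by apply: big1 => i _; rewrite mxE expr0n.
by rewrite mulr0 addr0.
Qed.

Lemma zid (V : zmodType) (d u v s : V) : d - u - s = d - v - s - (u - v).
Proof. by rewrite opprB [RHS]addrAC -[in RHS](addrA d) addKr. Qed.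

Definition K0 (M2 Bd2 : R) :=
  Num.sqrt (2 * (2^-1 * M2 + 1)) * Num.sqrt (2 * (2^-1 * M2 + 1) / lam1)
  + Num.sqrt Bd2 * (2^-1 * M2 + 1) / lam1.

Lemma ell_lip d (L1 L2 : 'M[R]_(p, r)) M2 Bd2 :
  sqnorm2 d <= M2 -> frob2 (L1 - L2) <= Bd2 ->
  ell G lam1 lam2 d L1 <= ell G lam1 lam2 d L2 + K0 M2 Bd2 * frob (L1 - L2).
Proof.
move=> hd hB; apply/ler_addgt0Pr => e e0.
set e' := Num.min e 1.
have e'0 : 0 < e' by rewrite lt_min e0 ltr01.
have e'e : e' <= e by rewrite ge_min lexx.
have e'1 : e' <= 1 by rewrite ge_min lexx orbT.
have [x [s hxs]] := @ell_adh d L2 e' e'0.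
set V := 2^-1 * M2 + 1.
have hV : lhat G lam1 lam2 d L2 x s <= V.
  have := ell_le_half d L2; rewrite /V; lra.
set a := d - L2 *m x - s.
set D := L1 - L2.
have hl1' : 0 <= lam1 / 2 by apply: divr_ge0 => //; exact: ltW.
have hlx : 0 <= lam1 / 2 * sqnorm2 x by apply: mulr_ge0 => //; exact: sqnorm2_ge0.
have hls : 0 <= lam2 * l1linf G s by apply: mulr_ge0; [exact: ltW | exact: l1linf_ge0].
have ha : sqnorm2 a <= 2 * V.
  move: hV; rewrite /lhat -/a; lra.
have hx : sqnorm2 x <= 2 * V / lam1.
  rewrite ler_pdivlMr //.
  move: hV; rewrite /lhat -/a; have := sqnorm2_ge0 a.
  rewrite mulrC; lra.
have eq1 : lhat G lam1 lam2 d L1 x s =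
   lhat G lam1 lam2 d L2 x s + 2^-1 * (- 2 * dot a (D *m x) + sqnorm2 (D *m x)).
  rewrite /lhat (@zid _ d (L1 *m x) (L2 *m x) s) -mulmxBl -/a -/D sqnorm2B; ring.
have hdot : `|dot a (D *m x)| <= Num.sqrt (sqnorm2 a) * Num.sqrt (sqnorm2 (D *m x)).
  exact: (CS_abs (fun i => a i 0) (fun i => (D *m x) i 0)).
have hDx := mulmx_bound D x.
have hfD : frob D = Num.sqrt (frob2 D) by [].
set del := frob D.
have del0 : 0 <= del by exact: sqrtr_ge0.
have del2 : frob2 D = del ^+ 2 by rewrite frob_sq.
have hsqDx : Num.sqrt (sqnorm2 (D *m x)) <= del * Num.sqrt (sqnorm2 x).
  rewrite /del hfD -sqrtrM ?frob2_ge0 //; exact: ler_wsqrtr.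
have qa : Num.sqrt (sqnorm2 a) <= Num.sqrt (2 * V) by exact: ler_wsqrtr.
have qx : Num.sqrt (sqnorm2 x) <= Num.sqrt (2 * V / lam1) by exact: ler_wsqrtr.
have qd : del <= Num.sqrt Bd2 by rewrite /del hfD; exact: ler_wsqrtr.
have qa0 := sqrtr_ge0 (sqnorm2 a).
have qx0 := sqrtr_ge0 (sqnorm2 x).
have hdot2 : `|dot a (D *m x)| <= Num.sqrt (2 * V) * (del * Num.sqrt (2 * V / lam1)).
  apply: le_trans hdot _; apply: ler_pM; [exact: sqrtr_ge0 | exact: sqrtr_ge0 | exact: qa |].
  apply: le_trans hsqDx _; apply: ler_wpM2l => //.
have hDx2 : sqnorm2 (D *m x) <= del * Num.sqrt Bd2 * (2 * V / lam1).
  apply: le_trans hDx _; rewrite del2 expr2; apply: ler_pM => //.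
  - by apply: mulr_ge0.
  - exact: sqnorm2_ge0.
  - by apply: ler_wpM2l.
have hn := ler_norm (- dot a (D *m x)).
rewrite normrN in hn.
have := ell_le d L1 x s; rewrite eq1 /K0 -/V.
move: hxs hdot2 hDx2 hn e'e; lra.
Qed.

End Ell.

Lemma entry_le p r (A : 'M[R]_(p,r)) i j : `|A i j| <= `|A|.
Proof.
change (`|A|) with (mx_norm A). rewrite mx_normrE.
by apply: (le_bigmax _ _ (i, j)).
Qed.

End CS.
Arguments entry_le {R p r}.
Arguments frob2_ge0 {R m n}.
Arguments frob_sq {R m n}.
Arguments frob2B_le {R m n}.
Arguments frob2D_le {R m n}.
Arguments frob2BC {R m n}.
Arguments frobBC {R m n}.
Arguments frob2_diff {R m n}.
Arguments sqnorm2_ge0 {R n}.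
Arguments frob2 {R m n}.

Theorem proposition4 (R : realType) (p r : nat) (lam1 lam2 M : R)
  (G : {set {set 'I_p}}) (d : nat -> 'cV[R]_p) (Lset : set 'M[R]_(p, r)) :
  (0 < p)%N -> (0 < r)%N -> 0 < lam1 -> 0 < lam2 ->
  (forall t, (1 <= t)%N -> Num.sqrt (sqnorm2 (d t)) <= M) ->
  compact Lset ->
  (exists C : R, forall t, (1 <= t)%N -> forall L, Lset L ->
     `|emp_cost G lam1 lam2 d t L| <= C) /\
  (exists K : R, forall t, (1 <= t)%N -> forall L1 L2, Lset L1 -> Lset L2 ->
     `|emp_cost G lam1 lam2 d t L1 - emp_cost G lam1 lam2 d t L2|
       <= K * frob (L1 - L2)).
Proof.
move=> p0 r0 hl1 hl2 hM cpt.
have [N [_ HN]] := compact_bounded cpt.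
set Nb := `|N| + 1.
have hLb : forall L, Lset L -> forall i j, `|L i j| <= Nb.
  move=> L hL i j; apply: le_trans (entry_le L i j) _.
  apply: (HN Nb) => //; rewrite /Nb; apply: (le_lt_trans (ler_norm N)); by rewrite ltrDl ltr01.
set B2 := \sum_(i < p) \sum_(j < r) Nb ^+ 2.
have hB2 : forall L, Lset L -> frob2 L <= B2.
  move=> L hL; apply: ler_sum => i _; apply: ler_sum => j _.
  have := hLb L hL i j; rewrite ler_norml => /andP[h1 h2]; nra.
have B20 : 0 <= B2 by apply: sumr_ge0 => i _; apply: sumr_ge0 => j _; exact: sqr_ge0.
set M2 := M ^+ 2.
have hd : forall t, (1 <= t)%N -> sqnorm2 (d t) <= M2.
  move=> t ht; rewrite -(sqr_sqrtr (sqnorm2_ge0 (d t))) /M2.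
  have := hM t ht; have := sqrtr_ge0 (sqnorm2 (d t)); nra.
split.
  exists (2^-1 * M2 + lam1 / 2 * B2) => t ht L hL.
  set T : R := t%:R.
  have T1 : 1 <= T by rewrite /T ler1n.
  set u := T^-1.
  have uT : u * T = 1 by rewrite /u mulVf // gt_eqF //; apply: lt_le_trans T1; exact: ltr01.
  have u0 : 0 <= u by rewrite /u invr_ge0; apply: le_trans T1; exact: ler01.
  set S := \sum_(1 <= i < t.+1) ell G lam1 lam2 (d i) L.
  have S0 : 0 <= S by apply: sumr_ge0 => i _; exact: (@ell_ge0 R p r G lam1 lam2 hl1 hl2).
  have S1 : S <= 2^-1 * M2 * T.
    have -> : 2^-1 * M2 * T = \sum_(1 <= i < t.+1) (2^-1 * M2).
      by rewrite sumr_const_nat subn1 /= mulr_natr.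
    apply: ler_sum_nat => i /andP[hi _].
    exact: le_trans (@ell_le_half R p r G lam1 lam2 hl1 hl2 (d i) L) (ler_wpM2l _ (hd i hi)).
  have F0 := frob2_ge0 L.
  have F1 := hB2 L hL.
  have ec : emp_cost G lam1 lam2 d t L = u * S + lam1 / 2 * (u * frob2 L).
    by rewrite /emp_cost frob_sq invfM -/T -/u -/S; ring.
  have l0 : 0 <= lam1 / 2 by apply: divr_ge0 => //; exact: ltW.
  have P1 : 0 <= u * frob2 L by exact: mulr_ge0.
  have P2 : u * frob2 L <= B2.
    have : u <= 1 by nra.
    nra.
  have P3 : u * S <= 2^-1 * M2 by nra.
  rewrite ec ger0_norm; last by apply: addr_ge0; [exact: mulr_ge0 | exact: mulr_ge0].
  have : lam1 / 2 * (u * frob2 L) <= lam1 / 2 * B2 by exact: ler_wpM2l.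
  lra.
set K1 := @K0 R lam1 M2 (4 * B2).
exists (K1 + lam1 / 2 * Num.sqrt (4 * B2)) => t ht L1 L2 h1 h2.
set T : R := t%:R.
have T1 : 1 <= T by rewrite /T ler1n.
set u := T^-1.
have uT : u * T = 1 by rewrite /u mulVf // gt_eqF //; apply: lt_le_trans T1; exact: ltr01.
have u0 : 0 <= u by rewrite /u invr_ge0; apply: le_trans T1; exact: ler01.
have u1 : u <= 1 by nra.
have hD : frob2 (L1 - L2) <= 4 * B2.
  have := frob2B_le L1 L2; have := hB2 L1 h1; have := hB2 L2 h2; lra.
have hD' : frob2 (L2 - L1) <= 4 * B2 by rewrite frob2BC.
set del := frob (L1 - L2).
have del0 : 0 <= del by exact: sqrtr_ge0.
have hell : forall i, (1 <= i)%N ->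
   `|ell G lam1 lam2 (d i) L1 - ell G lam1 lam2 (d i) L2| <= K1 * del.
  move=> i hi; rewrite ler_norml; apply/andP; split.
  - have := @ell_lip R p r G lam1 lam2 hl1 hl2 (d i) L2 L1 M2 (4 * B2) (hd i hi) hD'.
    rewrite frobBC -/del -/K1; lra.
  - have := @ell_lip R p r G lam1 lam2 hl1 hl2 (d i) L1 L2 M2 (4 * B2) (hd i hi) hD.
    rewrite -/del -/K1; lra.
set X := \sum_(1 <= i < t.+1) (ell G lam1 lam2 (d i) L1 - ell G lam1 lam2 (d i) L2).
have hX : `|X| <= K1 * del * T.
  apply: le_trans (ler_norm_sum _ _ _) _.
  have -> : K1 * del * T = \sum_(1 <= i < t.+1) (K1 * del).
    by rewrite sumr_const_nat subn1 /= mulr_natr.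
  apply: ler_sum_nat => i /andP[hi _].
  exact: hell.
set Y := frob2 L1 - frob2 L2.
have hY : `|Y| <= del * Num.sqrt (4 * B2).
  apply: le_trans (frob2_diff L1 L2) _; apply: ler_pM => //; try exact: sqrtr_ge0.
  apply: ler_wsqrtr; have := frob2D_le L1 L2; have := hB2 L1 h1; have := hB2 L2 h2; lra.
have ec : emp_cost G lam1 lam2 d t L1 - emp_cost G lam1 lam2 d t L2
   = u * X + lam1 / 2 * u * Y.
  rewrite /emp_cost !frob_sq invfM -/T -/u /X sumrB /Y; ring.
rewrite ec.
have l0 : 0 <= lam1 / 2 by apply: divr_ge0 => //; exact: ltW.
have hA : `|u * X| <= K1 * del.
  rewrite normrM (ger0_norm u0).
  have nX := normr_ge0 X; nra.
have hB : `|lam1 / 2 * u * Y| <= lam1 / 2 * Num.sqrt (4 * B2) * del.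
  rewrite normrM (ger0_norm (mulr_ge0 l0 u0)).
  have nY := normr_ge0 Y; have sq0 := sqrtr_ge0 (4 * B2).
  have : `|Y| * u <= `|Y| by rewrite ler_piMr.
  nra.
apply: le_trans (ler_normD _ _) _.
lra.
Qed.
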